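(* Let $H$ be a graph (possibly with loops) on $n$ vertices. Then for any integer $c\geq 2n$, the independence number of the exponential graph satisfies $\alpha(\mathcal{E}_c(H))\leq n c^{n-1}$.
   Context: For a finite graph $H$ (no multiple edges, loops allowed) and integer $c\ge 1$, two maps $\phi_1,\phi_2:V(H)\to[c]$ are co-proper if $\phi_1(u)\ne\phi_2(v)$ whenever $u\sim v$ in $H$. The exponential graph $\mathcal{E}_c(H)$ has vertex set $[c]^{V(H)}$, with $\phi_1\sim\phi_2$ iff they are co-proper. An independent set is a set of vertices no two distinct members of which are adjacent; $\alpha$ is the maximum size of an independent set. *)

(* Defs.v *)
From mathcomp Require Import all_boot.
Set Implicit Arguments. Unset Strict Implicit. Unset Printing Implicit Defensive.

(* A graph H (no multiple edges, loops allowed) is a finite vertex type V with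
   a symmetric adjacency relation e : rel V (e u u allowed = loop at u). *)

Definition coproper (V : finType) (e : rel V) (c : nat)
  (phi1 phi2 : {ffun V -> 'I_c}) : bool :=
  [forall u, forall v, e u v ==> (phi1 u != phi2 v)].

Definition exp_adj (V : finType) (e : rel V) (c : nat) : rel {ffun V -> 'I_c} :=
  fun phi1 phi2 => coproper e phi1 phi2.

Definition exp_independent (V : finType) (e : rel V) (c : nat)
  (S : {set {ffun V -> 'I_c}}) : bool :=
  [forall x in S, forall y in S, (x != y) ==> ~~ exp_adj e x y].

(* Main.v *)
Require Import Defs.
From mathcomp Require Import all_boot all_fingroup zify.
Set Implicit Arguments. Unset Strict Implicit. Unset Printing Implicit Defensive.

Definition diffc (c x y : nat) := if y <= x then x - y else x + c - y.
Definition shn (c x k : nat) := if x + k < c then x + k else x + k - c.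
Definition negn (c k : nat) := if k == 0 then 0 else c - k.

Definition gfun c r k0 k := if diffc c k k0 < r then diffc c k k0 else diffc c k k0 - (c - r).

Ltac split_ifs := repeat match goal with
 | |- context[if ?b then _ else _] => let H := fresh "Hif" in destruct b eqn:H
 | H0 : context[if ?b then _ else _] |- _ => let H := fresh "Hif" in destruct b eqn:H
 end.
Ltac arith := unfold gfun, diffc, shn, negn in *; split_ifs; lia.

Lemma shn_lt c x k : x < c -> k < c -> shn c x k < c.
Proof. arith. Qed.
Lemma negn_lt c k : k < c -> negn c k < c.
Proof. arith. Qed.
Lemma shnK c x k : x < c -> k < c -> shn c (shn c x k) (negn c k) = x.
Proof. move=> *; arith. Qed.
Lemma shnKV c x k : x < c -> k < c -> shn c (shn c x (negn c k)) k = x.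
Proof. move=> *; arith. Qed.
Lemma shn_injk c x k1 k2 : x < c -> k1 < c -> k2 < c -> shn c x k1 = shn c x k2 -> k1 = k2.
Proof. move=> *; arith. Qed.
Lemma diff_sh c x a k : x < c -> a < c -> k < c ->
  diffc c (shn c x k) (shn c a k) = diffc c x a.
Proof. move=> *; arith. Qed.
Lemma kat_arith c r x y a k1 k2 : x < c -> y < c -> a < c -> k1 < c -> k2 < c ->
  diffc c x a < r -> diffc c y a < r -> shn c x k1 = shn c y k2 ->
  diffc c k2 k1 < r \/ diffc c k1 k2 < r.
Proof. move=> *; arith. Qed.


Lemma g_lt c r k0 k : k0 < c -> k < c -> r + r <= c -> 0 < r ->
  (k = k0 \/ diffc c k k0 < r \/ diffc c k0 k < r) -> gfun c r k0 k < r.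
Proof. move=> *; arith. Qed.

Lemma g_inj c r k0 k1 k2 : k0 < c -> k1 < c -> k2 < c -> r + r <= c -> 0 < r ->
  (k1 = k0 \/ diffc c k1 k0 < r \/ diffc c k0 k1 < r) ->
  (k2 = k0 \/ diffc c k2 k0 < r \/ diffc c k0 k2 < r) ->
  (k1 = k2 \/ diffc c k2 k1 < r \/ diffc c k1 k2 < r) ->
  gfun c r k0 k1 = gfun c r k0 k2 -> k1 = k2.
Proof. move=> *; arith. Qed.

Lemma trans_set (T : finType) (A B : {set T}) : #|A| = #|B| -> exists t : {perm T}, t @: A = B.
Proof.
move=> hAB.
pose s := enum A ++ enum (~: A). pose u := enum B ++ enum (~: B).
have ss : size s = #|T| by rewrite size_cat -!cardE cardsC.
have su : size u = #|T| by rewrite size_cat -!cardE cardsC.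
have us : uniq u.
  rewrite cat_uniq !enum_uniq /= andbT; apply/hasPn => x; rewrite mem_enum inE => xB.
  by rewrite /= mem_enum.
have memS : forall x, x \in s by move=> x; rewrite mem_cat !mem_enum inE orbN.
pose f x := nth x u (index x s).
have fi : injective f.
  move=> x y; rewrite /f (set_nth_default y); last by rewrite su -ss index_mem.
  move/eqP; rewrite nth_uniq ?su -?ss ?index_mem //.
  by move/eqP => h; rewrite -(nth_index x (memS x)) h nth_index.
exists (perm fi); apply/eqP; rewrite eqEcard card_imset ?hAB ?leqnn ?andbT //; last exact: perm_inj.
apply/subsetP => y /imsetP [x xA ->]; rewrite permE /f /s index_cat mem_enum xA.
have hi : index x (enum A) < #|B| by rewrite -hAB cardE index_mem mem_enum.
by rewrite /u nth_cat -cardE hi -(mem_enum B) mem_nth // -cardE.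
Qed.

Section Col.
Variable c : nat.
Definition sh (k x : 'I_c) : 'I_c := Ordinal (shn_lt (ltn_ord x) (ltn_ord k)).
Definition ng (k : 'I_c) : 'I_c := Ordinal (negn_lt (ltn_ord k)).
Lemma shK k : cancel (sh k) (sh (ng k)).
Proof. by move=> x; apply: val_inj; rewrite /= shnK. Qed.
Lemma shKV k : cancel (sh (ng k)) (sh k).
Proof. by move=> x; apply: val_inj; rewrite /= shnKV. Qed.
Lemma sh_inj k : injective (sh k).
Proof. exact: can_inj (shK k). Qed.

Variable r : nat.
Definition carc (a : 'I_c) : {set 'I_c} := [set x : 'I_c | diffc c x a < r].

Lemma sh_carc k a : sh k @: carc a = carc (sh k a).
Proof.
apply/setP=> x; apply/imsetP/idP.
  by case=> y; rewrite inE => hy ->; rewrite inE /= diff_sh.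
rewrite inE => hx; exists (sh (ng k) x); last by rewrite shKV.
rewrite inE; rewrite -(diff_sh (ltn_ord _) (ltn_ord a) (ltn_ord k)).
by have := congr1 val (shKV k x); rewrite /= => ->.
Qed.

Definition good (A : {set 'I_c}) := (#|A| == r) && [exists a, A == carc a].

Lemma good_sh k A : good A -> good (sh k @: A).
Proof.
rewrite /good => /andP [hA /existsP [a /eqP hAa]]; subst A.
rewrite /good card_imset; last exact: sh_inj.
rewrite hA /=.
by apply/existsP; exists (sh k a); rewrite sh_carc.
Qed.

Variable V : finType.
Definition img (f : {ffun V -> 'I_c}) : {set 'I_c} := [set f v | v : V].
Definition shf k (f : {ffun V -> 'I_c}) : {ffun V -> 'I_c} := [ffun v => sh k (f v)].
Definition pact (s : {perm 'I_c}) (f : {ffun V -> 'I_c}) : {ffun V -> 'I_c} :=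
  [ffun v => s (f v)].
Definition Arc := [set f : {ffun V -> 'I_c} | good (img f)].
Definition inter (T : {set {ffun V -> 'I_c}}) :=
  forall x y, x \in T -> y \in T -> x != y -> exists u v, x u = y v.

Lemma img_shf k f : img (shf k f) = sh k @: img f.
Proof. by rewrite /img -imset_comp; apply: eq_imset => v; rewrite ffunE. Qed.
Lemma img_pact s f : img (pact s f) = s @: img f.
Proof. by rewrite /img -imset_comp; apply: eq_imset => v; rewrite ffunE. Qed.
Lemma shf_Arc k f : f \in Arc -> shf k f \in Arc.
Proof. by rewrite !inE img_shf; apply: good_sh. Qed.
Lemma shfKV k f : shf k (shf (ng k) f) = f.
Proof. by apply/ffunP => v; rewrite !ffunE shKV. Qed.
Lemma pact_inj s : injective (pact s).
Proof. by move=> f g h; apply/ffunP => v; have := congr1 (fun g : {ffun V -> 'I_c} => g v) h; rewrite !ffunE => /perm_inj. Qed.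

Lemma cyc (K : {set 'I_c}) : 0 < r -> r + r <= c ->
  {in K &, forall k1 k2 : 'I_c, k1 != k2 -> diffc c k2 k1 < r \/ diffc c k1 k2 < r} ->
  #|K| <= r.
Proof.
move=> r0 rc hK.
case: (set_0Vmem K) => [->|[k0 k0K]]; first by rewrite cards0.
have P : forall k, k \in K -> (val k = val k0 \/ diffc c k k0 < r \/ diffc c k0 k < r).
  move=> k kK; case: (eqVneq k k0) => [->|ne]; first by left.
  by right; case: (hK k k0 kK k0K ne) => h; [right|left].
pose g (k : 'I_c) := gfun c r k0 k.
have gI : {in K &, injective g}.
  move=> k1 k2 h1 h2 e; apply: val_inj.
  apply: (g_inj (ltn_ord k0) (ltn_ord k1) (ltn_ord k2) rc r0 (P _ h1) (P _ h2)) => //.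
  case: (eqVneq k1 k2) => [->|ne]; first by left.
  by right; apply: hK.
rewrite cardE -(size_map g) -(size_iota 0 r); apply: uniq_leq_size.
  rewrite map_inj_in_uniq ?enum_uniq // => x y; rewrite !mem_enum; exact: gI.
move=> z /mapP [k]; rewrite mem_enum => kK ->; rewrite mem_iota add0n /=.
exact: (g_lt (ltn_ord k0) (ltn_ord k) rc r0 (P _ kK)).
Qed.

End Col.

Section Key.
Variables (c r : nat) (V : finType) (v0 : V).
Hypotheses (r0 : 0 < r) (rc : r + r <= c).

Lemma kat_cycle (T : {set {ffun V -> 'I_c}}) (hT : inter T) psi :
  psi \in Arc c r V -> #|[set k : 'I_c | shf k psi \in T]| <= r.
Proof.
rewrite inE => /andP [_ /existsP [a /eqP ha]].
apply: cyc => // k1 k2; rewrite !inE => h1 h2 ne.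
have ne' : shf k1 psi != shf k2 psi.
  apply/eqP => e; move/eqP: ne; apply; apply: val_inj.
  have := congr1 (fun f : {ffun V -> 'I_c} => val (f v0)) e; rewrite !ffunE /=.
  exact: shn_injk (ltn_ord _) (ltn_ord _) (ltn_ord _).
have [u [v e]] := hT _ _ h1 h2 ne'.
move: e; rewrite !ffunE => /(congr1 val) /= e.
have hu : psi u \in carc r a by rewrite -ha /img imset_f.
have hv : psi v \in carc r a by rewrite -ha /img imset_f.
rewrite !inE in hu hv.
exact: kat_arith (ltn_ord _) (ltn_ord _) (ltn_ord a) (ltn_ord _) (ltn_ord _) hu hv e.
Qed.

Lemma perT (T : {set {ffun V -> 'I_c}}) (hT : inter T) :
  c * #|T :&: Arc c r V| <= r * #|Arc c r V|.
Proof.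
have h1 : \sum_(psi in Arc c r V) #|[set k : 'I_c | shf k psi \in T]| <= r * #|Arc c r V|.
  rewrite mulnC -sum_nat_const; apply: leq_sum => psi; exact: kat_cycle.
have h2 : \sum_(psi in Arc c r V) #|[set k : 'I_c | shf k psi \in T]| =
          \sum_(k : 'I_c) #|[set psi in Arc c r V | shf k psi \in T]|.
  under eq_bigr => psi _ do rewrite -sum1dep_card.
  under [RHS]eq_bigr => k _ do rewrite -sum1dep_card.
  by rewrite (exchange_big_dep predT).
have h3 : forall k : 'I_c, #|T :&: Arc c r V| <= #|[set psi in Arc c r V | shf k psi \in T]|.
  move=> k; apply: leq_trans (leq_imset_card (shf k) _).
  apply: subset_leq_card; apply/subsetP => x; rewrite inE => /andP [xT xA].
  apply/imsetP; exists (shf (ng k) x); last by rewrite shfKV.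
  by rewrite inE shf_Arc // shfKV xT.
apply: leq_trans h1; rewrite h2.
have -> : c * #|T :&: Arc c r V| = \sum_(k : 'I_c) #|T :&: Arc c r V|.
  by rewrite big_const_ord iter_addn_0 mulnC.
by apply: leq_sum => k _; exact: h3.
Qed.

End Key.

Lemma imsetM (T : finType) (s t : {perm T}) (A : {set T}) : (s * t)%g @: A = t @: (s @: A).
Proof. by rewrite -imset_comp; apply: eq_imset => x; rewrite /= permM. Qed.

Lemma imset1 (T : finType) (A : {set T}) : (1%g : {perm T}) @: A = A.
Proof.
apply/setP => x; apply/imsetP/idP => [[y yA ->]|xA]; first by rewrite perm1.
by exists x; rewrite ?perm1.
Qed.

Section Key2.
Variables (c r : nat) (V : finType) (v0 : V).
Hypotheses (r0 : 0 < r) (rc : r + r <= c).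

Lemma key (S : {set {ffun V -> 'I_c}}) (hS : inter S) :
  c * #|[set f in S | #|img f| == r]| <= r * #|[set f : {ffun V -> 'I_c} | #|img f| == r]|.
Proof.
set Sr := [set f in S | _]; set Om := [set f : {ffun V -> 'I_c} | _].
have c0 : 0 < c by lia.
have rc' : r <= c by lia.
pose a0 : 'I_c := Ordinal c0.
pose K f := #|[set s : {perm 'I_c} | pact s f \in Arc c r V]|.
pose K0 := #|[set s : {perm 'I_c} | good r (s @: carc r a0)]|.
have carc0card : #|carc r a0| = r.
  have -> : carc r a0 = [set widen_ord rc' i | i : 'I_r].
    apply/setP => x; rewrite inE /diffc /= subn0; apply/idP/imsetP => [xr|[i _ ->]] //=.
    by exists (Ordinal xr) => //; apply: val_inj.
  by rewrite card_imset ?card_ord //; by move=> x y /(congr1 val) /= e; apply: val_inj.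
have hK : forall f, f \in Om -> K f = K0.
  move=> f; rewrite inE => /eqP hf.
  have hcard : #|carc r a0| = #|img f| by rewrite carc0card hf.
  have [t ht] := trans_set hcard.
  rewrite /K /K0 -(card_imset _ (mulgI t)); apply: eq_card => s.
  rewrite inE; apply/imsetP/idP.
    case=> s'; rewrite !inE img_pact => h ->.
    by rewrite imsetM ht.
  move=> h; exists (t^-1 * s)%g; last by rewrite mulKVg.
  by rewrite !inE img_pact imsetM -ht -(imsetM t t^-1) mulgV imset1.
have K0pos : 0 < K0.
  apply/card_gt0P; exists 1%g; rewrite inE imset1 /good carc0card eqxx /=.
  by apply/existsP; exists a0.
have sumX : forall (X : {set {ffun V -> 'I_c}}),
    \sum_(f in X) K f = \sum_(s : {perm 'I_c}) #|[set f in X | pact s f \in Arc c r V]|.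
  move=> X; rewrite /K.
  under eq_bigr => f _ do rewrite -sum1dep_card.
  under [RHS]eq_bigr => s _ do rewrite -sum1dep_card.
  by rewrite (exchange_big_dep predT).
have SrOm : Sr \subset Om by apply/subsetP => f; rewrite !inE => /andP [].
have LS : \sum_(f in Sr) K f = #|Sr| * K0.
  rewrite -sum_nat_const; apply: eq_bigr => f fS; apply: hK; exact: (subsetP SrOm).
have LO : \sum_(f in Om) K f = #|Om| * K0.
  by rewrite -sum_nat_const; apply: eq_bigr => f fO; apply: hK.
have per1 : forall s, c * #|[set f in Sr | pact s f \in Arc c r V]| <= r * #|Arc c r V|.
  move=> s.
  have hT : inter (pact s @: Sr).
    move=> x y /imsetP [f1 f1S ->] /imsetP [f2 f2S ->] ne.
    have ne' : f1 != f2 by apply: contraNneq ne => ->.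
    have f1S' : f1 \in S by move: f1S; rewrite inE => /andP [].
    have f2S' : f2 \in S by move: f2S; rewrite inE => /andP [].
    have [u [v e]] := hS _ _ f1S' f2S' ne'.
    by exists u, v; rewrite !ffunE e.
  apply: leq_trans _ (perT v0 r0 rc hT).
  rewrite leq_mul2l; apply/orP; right.
  rewrite -(card_imset _ (pact_inj (s:=s))); apply: subset_leq_card.
  apply/subsetP => x /imsetP [f]; rewrite inE => /andP [fS fA] ->.
  by rewrite inE fA imset_f.
have per2 : forall s, #|Arc c r V| <= #|[set f in Om | pact s f \in Arc c r V]|.
  move=> s; rewrite -(card_imset _ (pact_inj (s:=s^-1))); apply: subset_leq_card.
  apply/subsetP => x /imsetP [f fA ->]; rewrite !inE.
  have -> : pact s (pact s^-1 f) = f by apply/ffunP => v; rewrite !ffunE permKV.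
  move: fA; rewrite inE => fA; rewrite fA andbT img_pact card_imset; last exact: perm_inj.
  by move: fA => /andP [].
rewrite -(leq_pmul2r K0pos) -mulnA -LS sumX big_distrr /=.
rewrite -mulnA -LO sumX big_distrr /=.
apply: leq_sum => s _; apply: leq_trans (per1 s) _.
by rewrite leq_mul2l per2 orbT.
Qed.
End Key2.

Lemma part (V : finType) (c : nat) (A : {set {ffun V -> 'I_c}}) :
  #|A| = \sum_(j < #|V|.+1) #|[set f in A | #|img f| == j]|.
Proof.
rewrite -sum1_card (partition_big (fun f : {ffun V -> 'I_c} => (inord #|img f| : 'I_#|V|.+1)) predT) //=.
apply: eq_bigr => j _; rewrite sum1dep_card; apply: eq_card => f; rewrite !inE.
have hf : #|img f| < #|V|.+1 by rewrite ltnS; exact: leq_imset_card.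
by rewrite -val_eqE /= inordK.
Qed.

Theorem lemma4 (V : finType) (e : rel V) (he : symmetric e) (c : nat)
  (hn : 0 < #|V|) (hc : 2 * #|V| <= c) (S : {set {ffun V -> 'I_c}}) :
  exp_independent e S -> #|S| <= #|V| * c ^ (#|V|).-1.
Proof.
move=> hind.
have [v0 _] := card_gt0P hn.
have hS : inter S.
  move=> x y xS yS xy.
  move/forallP: hind => /(_ x) /implyP /(_ xS) /forallP /(_ y) /implyP /(_ yS) /implyP /(_ xy).
  rewrite /exp_adj /coproper negb_forall => /existsP [u]; rewrite negb_forall => /existsP [v].
  by rewrite negb_imply negbK => /andP [_ /eqP h]; exists u, v.
have c0 : 0 < c by lia.
have main : c * #|S| <= #|V| * c ^ #|V|.
  have hT : c ^ #|V| = \sum_(j < #|V|.+1) #|[set f : {ffun V -> 'I_c} | #|img f| == j]|.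
    have := part [set: {ffun V -> 'I_c}]; rewrite cardsT card_ffun card_ord => ->.
    by apply: eq_bigr => j _; apply: eq_card => f; rewrite !inE.
  rewrite (part S) hT !big_distrr /=; apply: leq_sum => j _.
  case: (posnP j) => [j0|jpos].
    have -> : [set f in S | #|img f| == j] = set0; last by rewrite cards0 muln0.
    apply/setP => f; rewrite !inE j0.
    have : 0 < #|img f| by apply/card_gt0P; exists (f v0); rewrite /img imset_f.
    by move=> h; rewrite eqn0Ngt h andbF.
  have jn : j <= #|V| by rewrite -ltnS ltn_ord.
  have jc : j + j <= c by lia.
  apply: leq_trans (key v0 jpos jc hS) _.
  by rewrite leq_mul2r jn orbT.
have ee : c ^ #|V| = c * c ^ (#|V|).-1 by rewrite -expnS prednK.
by move: main; rewrite ee mulnCA leq_pmul2l.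
Qed.
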